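(* Let $P$ be a right LCM semigroup with identity and let $\vartheta$ be a right action of $P$ on a group $G$ by identity-preserving endomorphisms. Then the right semidirect product $P{}_\vartheta\!\ltimes G$ is a right LCM semigroup such that $J(P)\cong J(P{}_\vartheta\!\ltimes G)$ (via $pP\mapsto (pP)\times G$, $\emptyset\mapsto\emptyset$) and $(P{}_\vartheta\!\ltimes G)^*=P^*{}_\vartheta\!\ltimes G$. Moreover, $P{}_\vartheta\!\ltimes G$ is cancellative if and only if $P$ is cancellative and every $\vartheta_p$, $p\in P$, is injective.
   Context: A right LCM semigroup is a left cancellative semigroup $P$ with identity $e$ such that for all $p,q\in P$ either $pP\cap qP=\emptyset$ or $pP\cap qP=rP$ for some $r\in P$; $J(P)=\{pP:p\in P\}\cup\{\emptyset\}$ is its semilattice of principal right ideals (under intersection) and $P^*$ its group of invertible elements. A right action of $P$ on $G$ is a unital semigroup antihomomorphism $\vartheta:P\to\operatorname{End}G$, i.e. $\vartheta_e=\mathrm{id}$ and $\vartheta_p\vartheta_q=\vartheta_{qp}$. The right semidirect product $P{}_\vartheta\!\ltimes G$ is the set $P\times G$ with multiplication $(p,g)(q,h)=(pq,\vartheta_q(g)h)$. Cancellative means both left and right cancellative. *)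

(* Defs.v *)
Section Defs.
Context {P : Type}.

Definition seteq (X Y : P -> Prop) : Prop := forall x, X x <-> Y x.
Definition setI (X Y : P -> Prop) : P -> Prop := fun x => X x /\ Y x.
Definition set0 : P -> Prop := fun _ => False.

Definition is_monoid (mul : P -> P -> P) (e : P) : Prop :=
  (forall p q r, mul (mul p q) r = mul p (mul q r)) /\
  (forall p, mul e p = p) /\ (forall p, mul p e = p).

Definition left_cancellative (mul : P -> P -> P) : Prop :=
  forall p q r, mul p q = mul p r -> q = r.
Definition right_cancellative (mul : P -> P -> P) : Prop :=
  forall p q r, mul q p = mul r p -> q = r.
Definition cancellative (mul : P -> P -> P) : Prop :=
  left_cancellative mul /\ right_cancellative mul.

Definition rideal (mul : P -> P -> P) (p : P) : P -> Prop :=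
  fun x => exists q, x = mul p q.

Definition right_LCM (mul : P -> P -> P) (e : P) : Prop :=
  is_monoid mul e /\ left_cancellative mul /\
  forall p q, seteq (setI (rideal mul p) (rideal mul q)) set0 \/
              exists r, seteq (setI (rideal mul p) (rideal mul q)) (rideal mul r).

Definition inJ (mul : P -> P -> P) (X : P -> Prop) : Prop :=
  seteq X set0 \/ exists p, seteq X (rideal mul p).

Definition is_unit (mul : P -> P -> P) (e : P) (x : P) : Prop :=
  exists y, mul x y = e /\ mul y x = e.

Definition is_group (mul : P -> P -> P) (one : P) (inv : P -> P) : Prop :=
  is_monoid mul one /\ (forall g, mul (inv g) g = one) /\ (forall g, mul g (inv g) = one).

End Defs.

Definition is_endo {G : Type} (mulG : G -> G -> G) (oneG : G) (f : G -> G) : Prop :=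
  (forall g h, f (mulG g h) = mulG (f g) (f h)) /\ f oneG = oneG.

Definition injective {A B : Type} (f : A -> B) : Prop := forall x y, f x = f y -> x = y.

Definition right_action {P G : Type} (mulP : P -> P -> P) (e : P)
    (mulG : G -> G -> G) (oneG : G) (theta : P -> G -> G) : Prop :=
  (forall p, is_endo mulG oneG (theta p)) /\
  (forall g, theta e g = g) /\
  (forall p q g, theta p (theta q g) = theta (mulP q p) g).

Definition sd_mul {P G : Type} (mulP : P -> P -> P) (mulG : G -> G -> G)
    (theta : P -> G -> G) (x y : P * G) : P * G :=
  (mulP (fst x) (fst y), mulG (theta (fst y) (snd x)) (snd y)).

Definition prodG {P G : Type} (X : P -> Prop) : P * G -> Prop := fun x => X (fst x).

(* Main.v *)
Require Import Defs.

Section Aux.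
Variables (G : Type) (mulG : G -> G -> G) (oneG : G) (invG : G -> G).
Hypothesis hG : is_group mulG oneG invG.

Lemma gcanl g h k : mulG g h = mulG g k -> h = k.
Proof.
  destruct hG as [[A [L R]] [IL IR]]. intro H.
  rewrite <- (L h), <- (L k), <- (IL g), !A, H. reflexivity.
Qed.

Lemma gcanr g h k : mulG h g = mulG k g -> h = k.
Proof.
  destruct hG as [[A [L R]] [IL IR]]. intro H.
  rewrite <- (R h), <- (R k), <- (IR g), <- !A, H. reflexivity.
Qed.
End Aux.

Lemma rideal_sd (P G : Type) (mulP : P -> P -> P) (e : P)
  (mulG : G -> G -> G) (oneG : G) (invG : G -> G) (theta : P -> G -> G)
  (hG : is_group mulG oneG invG) (p : P) (g : G) :
  seteq (rideal (sd_mul mulP mulG theta) (p, g)) (prodG (rideal mulP p)).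
Proof.
  destruct hG as [[A [L R]] [IL IR]].
  intros [x k]; unfold prodG, rideal, sd_mul; simpl; split.
  - intros [[q h] E]. inversion E; subst. exists q; reflexivity.
  - intros [q E]. subst. exists (q, mulG (invG (theta q g)) k).
    simpl. rewrite <- A, IR, L. reflexivity.
Qed.

Theorem mainTheorem18 (P G : Type) (mulP : P -> P -> P) (e : P)
  (mulG : G -> G -> G) (oneG : G) (invG : G -> G) (theta : P -> G -> G)
  (hP : right_LCM mulP e) (hG : is_group mulG oneG invG)
  (htheta : right_action mulP e mulG oneG theta) :
  (* P x_theta G is a right LCM semigroup with identity (e, 1) *)
  right_LCM (sd_mul mulP mulG theta) (e, oneG) /\
  (* J(P) ~ J(P x_theta G) via X |-> X x G (pP |-> pP x G, empty |-> empty) *)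
  ((forall p : P, inJ (sd_mul mulP mulG theta) (@prodG P G (rideal mulP p))) /\
   seteq (@prodG P G set0) set0 /\
   (forall Y, inJ (sd_mul mulP mulG theta) Y ->
      exists X, inJ mulP X /\ seteq Y (@prodG P G X)) /\
   (forall X Y, inJ mulP X -> inJ mulP Y ->
      seteq (@prodG P G X) (@prodG P G Y) -> seteq X Y) /\
   (forall X Y : P -> Prop,
      seteq (@prodG P G (setI X Y)) (setI (@prodG P G X) (@prodG P G Y)))) /\
  (* (P x_theta G)^* = P^* x_theta G *)
  (forall (x : P * G), is_unit (sd_mul mulP mulG theta) (e, oneG) x <->
                       is_unit mulP e (fst x)) /\
  (* cancellativity *)
  (cancellative (sd_mul mulP mulG theta) <->
   (cancellative mulP /\ forall p, injective (theta p))).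
Proof.
  pose proof (rideal_sd P G mulP e mulG oneG invG theta hG) as RS.
  pose proof (gcanl G mulG oneG invG hG) as CL.
  pose proof (gcanr G mulG oneG invG hG) as CR.
  destruct hP as [[PA [PL PR]] [PLC PLCM]].
  destruct hG as [[A [L R]] [IL IR]].
  destruct htheta as [TE [TId TC]].
  split; [|split; [|split]].
  - split; [split; [|split]|split].
    + intros [p g] [q h] [r k]; unfold sd_mul; simpl.
      rewrite PA, (proj1 (TE r)), TC, A. reflexivity.
    + intros [p g]; unfold sd_mul; simpl. rewrite PL, (proj2 (TE p)), L. reflexivity.
    + intros [p g]; unfold sd_mul; simpl. rewrite PR, TId, R. reflexivity.
    + intros [p g] [q h] [r k]; unfold sd_mul; simpl. intro E. inversion E as [[E1 E2]].
      apply PLC in E1. subst r. apply CL in E2. subst. reflexivity.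
    + intros [p g] [q h]. destruct (PLCM p q) as [H | [r H]].
      * left. intros [x k]. specialize (H x). pose proof (RS p g (x,k)).
        pose proof (RS q h (x,k)). unfold setI, prodG, set0 in *; simpl in *. tauto.
      * right. exists (r, oneG). intros [x k]. specialize (H x).
        pose proof (RS p g (x,k)). pose proof (RS q h (x,k)). pose proof (RS r oneG (x,k)).
        unfold setI, prodG in *; simpl in *. tauto.
  - split; [|split; [|split; [|split]]].
    + intro p. right. exists (p, oneG). intro x. pose proof (RS p oneG x); tauto.
    + intro x; tauto.
    + intros Y [H | [[p g] H]].
      * exists set0. split. left; intro; tauto. intro x. apply H.
      * exists (rideal mulP p). split. right; exists p; intro; tauto.
        intro x. pose proof (H x); pose proof (RS p g x); tauto.
    + intros X Y _ _ H x. apply (H (x, oneG)).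
    + intros X Y x. unfold prodG, setI. tauto.
  - intros [p g]; simpl; split.
    + intros [[q h] [E1 E2]]. unfold sd_mul in *; simpl in *.
      injection E1 as F1 _. injection E2 as F2 _. exists q; split; assumption.
    + intros [q [E1 E2]]. exists (q, invG (theta q g)).
      unfold sd_mul; simpl. rewrite E1, E2, IR. split; [reflexivity|].
      f_equal. transitivity (mulG (theta p (invG (theta q g))) (theta p (theta q g))).
      { f_equal. rewrite TC, E2, TId. reflexivity. }
      rewrite <- (proj1 (TE p)), IL. apply (proj2 (TE p)).
  - split.
    + intros [_ RC]. split; [split|].
      * exact PLC.
      * intros p q r E. 
        assert (H : sd_mul mulP mulG theta (q, oneG) (p, oneG) = sd_mul mulP mulG theta (r, oneG) (p, oneG)).
        { unfold sd_mul; simpl. rewrite E. reflexivity. }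
        apply RC in H. inversion H; reflexivity.
      * intros p g k E.
        assert (H : sd_mul mulP mulG theta (e, g) (p, oneG) = sd_mul mulP mulG theta (e, k) (p, oneG)).
        { unfold sd_mul; simpl. rewrite E. reflexivity. }
        apply RC in H. inversion H; reflexivity.
    + intros [[_ PRC] TI]. split.
      * intros [p g] [q h] [r k]; unfold sd_mul; simpl. intro E. inversion E as [[E1 E2]].
        apply PLC in E1. subst r. apply CL in E2. subst. reflexivity.
      * intros [p g] [q h] [r k]; unfold sd_mul; simpl. intro E. inversion E as [[E1 E2]].
        apply PRC in E1. subst r. apply CR in E2. apply TI in E2. subst. reflexivity.
Qed.
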